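(* Let $K, C \in \mathbb{N}$ be positive integers, let $p \in \mathbb{Q}_{>0}$, let $q_1, q_2 \in \mathbb{Q}$, and let $\varphi, \psi : \mathbb{Q} \to \mathbb{Z}$ be functions that are antiperiodic with antiperiod $C$ on the grid $\frac{C}{K}\mathbb{Z}$, i.e. $\varphi(x + C) = -\varphi(x)$ and $\psi(x+C) = -\psi(x)$ for all $x \in \frac{C}{K}\mathbb{Z}$. For nonzero $x \in \frac{1}{K}\mathbb{Z}$ define \[ s_d(x) = \frac{p^x + q_1 \varphi(Cx) + q_2 \psi(Cx)}{x}, \] where $p^x$ denotes the positive real power. Let $t = \frac{i}{K}$ with $i \in \mathbb{Z}\setminus\{0\}$, and let $u, v$ be nonnegative integers such that the four points $t,\ t+2v+1,\ t+2u,\ t+2u+2v+1$ are all nonzero. Put \[ s_0 = s_d(t),\quad s_1 = s_d(t+2v+1),\quad s_2 = s_d(t+2u),\quad s_3 = s_d(t+2u+2v+1). \] Then \[ \frac{s_0 \cdot t + s_1 \cdot (t + 2v + 1)}{s_2 \cdot (t + 2u) + s_3 \cdot (t + 2u + 2v + 1)} = \frac{1}{p^{2u}}. \]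
   Context: The functions $\varphi,\psi$ play the role of discrete ''oscillators''; antiperiodicity with antiperiod $C$ means a shift of the argument by $C$ flips the sign. The function $s_d$ is called the discrete generating function. *)

(* Defs.v *)
From HB Require Import structures.
From mathcomp Require Import all_boot all_order all_algebra.
From mathcomp Require Import all_classical all_reals all_analysis.
Set Implicit Arguments. Unset Strict Implicit. Unset Printing Implicit Defensive.
Import Order.TTheory GRing.Theory Num.Theory.
Local Open Scope ring_scope.

Definition antiperiodic_on_grid (K C : nat) (f : rat -> int) : Prop :=
  forall m : int,
    f ((C%:R / K%:R) * m%:~R + C%:R) = - f ((C%:R / K%:R) * m%:~R).

Definition s_d (R : realType) (C : nat) (p q1 q2 : rat) (phi psi : rat -> int)
  (x : rat) : R :=
  ((ratr p : R) `^ (ratr x)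
    + ratr q1 * ((phi (C%:R * x))%:~R)
    + ratr q2 * ((psi (C%:R * x))%:~R)) / ratr x.

(* Main.v *)
Require Import Defs.
From HB Require Import structures.
From mathcomp Require Import all_boot all_order all_algebra.
From mathcomp Require Import all_classical all_reals all_analysis.
From mathcomp Require Import ring lra.
Import Order.TTheory GRing.Theory Num.Theory.
Local Open Scope ring_scope.

Lemma anti_iter (K C : nat) (hK : (0 < K)%N) (f : rat -> int)
  (hf : antiperiodic_on_grid K C f) (m : int) (n : nat) :
  f ((C%:R / K%:R) * m%:~R + n%:R * C%:R) = (-1) ^+ n * f ((C%:R / K%:R) * m%:~R).
Proof.
elim: n => [|n IH]; first by rewrite mul0r addr0 expr0 mul1r.
have KN : (K%:R : rat) != 0 by rewrite pnatr_eq0 -lt0n.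
have -> : (C%:R / K%:R) * m%:~R + n.+1%:R * C%:R
   = (C%:R / K%:R) * (m + n%:Z * K%:Z)%:~R + (C%:R : rat).
  rewrite intrD intrM -[n.+1]addn1 natrD /=; field; exact: KN.
rewrite hf.
have -> : (C%:R / K%:R) * (m + n%:Z * K%:Z)%:~R
   = (C%:R / K%:R) * m%:~R + n%:R * (C%:R : rat).
  rewrite intrD intrM /=; field; exact: KN.
rewrite IH exprS. ring.
Qed.

Theorem mainTheorem1 (R : realType) (K C : nat) (hK : (0 < K)%N) (hC : (0 < C)%N)
  (p q1 q2 : rat) (hp : 0 < p) (phi psi : rat -> int)
  (hphi : antiperiodic_on_grid K C phi) (hpsi : antiperiodic_on_grid K C psi)
  (i : int) (hi : i != 0) (u v : nat) :
  let t : rat := i%:~R / K%:R in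
  let x0 : rat := t in
  let x1 : rat := t + (2 * v + 1)%:R in
  let x2 : rat := t + (2 * u)%:R in
  let x3 : rat := t + (2 * u + 2 * v + 1)%:R in
  x0 != 0 -> x1 != 0 -> x2 != 0 -> x3 != 0 ->
  let s := s_d R C p q1 q2 phi psi in
  (s x0 * ratr x0 + s x1 * ratr x1) / (s x2 * ratr x2 + s x3 * ratr x3)
  = 1 / ((ratr p : R) `^ (2 * u)%:R).
Proof.
move=> t x0 x1 x2 x3 h0 h1 h2 h3 s.
have KN : (K%:R : rat) != 0 by rewrite pnatr_eq0 -lt0n.
have sE : forall x : rat, x != 0 -> s x * ratr x =
   (ratr p : R) `^ (ratr x) + ratr q1 * ((phi (C%:R * x))%:~R)
    + ratr q2 * ((psi (C%:R * x))%:~R).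
  by move=> x hx; rewrite /s /s_d divfK // fmorph_eq0.
have gE : forall n : nat, C%:R * (t + n%:R) = (C%:R / K%:R) * i%:~R + n%:R * C%:R.
  by move=> n; rewrite /t; field.
have g0 : C%:R * t = (C%:R / K%:R) * i%:~R + 0%:R * C%:R.
  by rewrite /t mul0r addr0; field.
rewrite !sE // /x0 /x1 /x2 /x3 g0 !gE !anti_iter //.
rewrite !expr0 !mul1r.
have e1 : forall n : nat, (-1) ^+ (n.*2) = 1 :> int by move=> n; rewrite -muln2 exprM sqrr_sign.
have s1 : forall n : nat, (-1) ^+ (2 * n + 1) = -1 :> int
  by move=> n; rewrite exprD exprM sqrrN !expr1n expr1 mul1r.
have s0 : forall n : nat, (-1) ^+ (2 * n) = 1 :> int
  by move=> n; rewrite exprM sqrrN !expr1n.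
have -> : (2 * u + 2 * v + 1 = 2 * (u + v) + 1)%N by rewrite mulnDr.
rewrite !s1 !s0 !mul1r !mulN1r !intrN.
set P := (ratr p : R).
have P0 : 0 < P by rewrite ltr0q.
have PN : P != 0 by rewrite gt_eqF.
have rE : forall n : nat, ratr (t + n%:R) = ratr t + n%:R :> R
  by move=> n; rewrite rmorphD /= ratr_nat.
rewrite !rE.
have pD : forall a b : R, P `^ (a + b) = P `^ a * P `^ b.
  by move=> a b; rewrite powRD // PN implybT.
have -> : (2 * (u + v) + 1)%:R = (2 * u)%:R + (2 * v + 1)%:R :> R
  by rewrite -natrD mulnDr addnA.
rewrite -!addrA !pD.
set a := P `^ ratr t.
set b := P `^ (2 * v + 1)%:R.
set c := P `^ (2 * u)%:R.
have a0 : a != 0 by rewrite gt_eqF // powR_gt0.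
have b0 : 0 < b by rewrite powR_gt0.
have c0 : c != 0 by rewrite gt_eqF // powR_gt0.
have b1 : 1 + b != 0 by rewrite gt_eqF // ltr_wpDr // ltW.
set X := ratr q1 * _; set Y := ratr q2 * _; set X' := ratr q1 * _; set Y' := ratr q2 * _.
have -> : X' = - X by rewrite /X' /X mulrN.
have -> : Y' = - Y by rewrite /Y' /Y mulrN.
have -> : a + (X + (Y + (a * b + (- X + - Y)))) = a * (1 + b) by ring.
have -> : a * c + (X + (Y + (a * (c * b) + (- X + - Y)))) = a * c * (1 + b) by ring.
field; apply/and3P; split => //.
Qed.
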